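(* Let $k$ be a field of characteristic $p>2$ ($p$ prime). For any $u,v,w\in k_0\langle X\rangle$, $\kappa(u,vw)\equiv 0\pmod{T(G_0)}$.
   Context: $X=\{x_i\mid i\ge0\}$ is countably infinite; $k_0\langle X\rangle$ is the free nonunitary associative $k$-algebra on $X$. $[a,b]=ab-ba$ and $\kappa(u,v)=[u,v]u^{p-1}v^{p-1}$. $G_0$ is the infinite-dimensional nonunitary Grassmann algebra over $k$ (linear basis the products $e_{i_1}\cdots e_{i_n}$, $n\ge1$, $i_1<\dots<i_n$, with $e_ie_j=-e_je_i$, $e_i^2=0$), and $T(G_0)$ is the set of $f\in k_0\langle X\rangle$ lying in the kernel of every algebra homomorphism $k_0\langle X\rangle\to G_0$. *)

(* Defs.v *)
From mathcomp Require Import all_boot all_order all_algebra.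
From mathcomp Require Import finmap.
Set Implicit Arguments. Unset Strict Implicit. Unset Printing Implicit Defensive.
Import Order.TTheory GRing.Theory.
Local Open Scope ring_scope.


Section Defs.
Variable k : fieldType.

(* The free nonunitary associative algebra k_0<X>, X = {x_i | i >= 0}.      *)
(* An element is represented by its coefficient function on words           *)
(* (w : seq nat, the word x_{w_0} x_{w_1} ... ); elements are exactly the   *)
(* finitely supported coefficient functions vanishing on the empty word.    *)
Definition FA := seq nat -> k.

Definition isFA (f : FA) : Prop :=
  f [::] = 0 /\ exists s : seq (seq nat), forall w, f w != 0 -> w \in s.

Definition fa_add (f g : FA) : FA := fun w => f w + g w.
Definition fa_opp (f : FA) : FA := fun w => - f w.
Definition fa_sub (f g : FA) : FA := fa_add f (fa_opp g).
Definition fa_scale (c : k) (f : FA) : FA := fun w => c * f w.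
(* concatenation product: coefficient of w is sum over splittings w = a b,
   a, b nonempty *)
Definition fa_mul (f g : FA) : FA :=
  fun w => \sum_(1 <= i < size w) f (take i w) * g (drop i w).
(* fa_pow f n = f^n for n >= 1 (f * f * ... * f, n factors) *)
Definition fa_pow (f : FA) (n : nat) : FA := iter n.-1 (fa_mul f) f.

Definition fa_comm (f g : FA) : FA := fa_sub (fa_mul f g) (fa_mul g f).

Definition kappa (p : nat) (u v : FA) : FA :=
  fa_mul (fa_mul (fa_comm u v) (fa_pow u p.-1)) (fa_pow v p.-1).

(* The infinite-dimensional nonunitary Grassmann algebra G_0 over k.       *)
(* Basis: e_S = e_{i_1} ... e_{i_n} for nonempty finite S = {i_1<...<i_n}. *)
(* An element is its coefficient function on finite sets of indices;       *)
(* elements are the finitely supported functions vanishing on the empty set.*)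
Definition G0 := {fset nat} -> k.

Definition isG0 (g : G0) : Prop :=
  g fset0 = 0 /\ exists s : seq {fset nat}, forall S, g S != 0 -> S \in s.

Definition g0_zero : G0 := fun _ => 0.
Definition g0_add (f g : G0) : G0 := fun S => f S + g S.
Definition g0_scale (c : k) (f : G0) : G0 := fun S => c * f S.

Definition ninv (A B : {fset nat}) : nat :=
  \sum_(a <- A) \sum_(b <- B) (b < a)%N.

(* e_A e_B = (-1)^(ninv A B) e_(A :|: B) if A, B disjoint, 0 otherwise. *)
Definition g0_mul (f g : G0) : G0 :=
  fun S => \sum_(A <- fpowerset S)
             (-1) ^+ ninv A (S `\` A)%fset * f A * g (S `\` A)%fset.

Definition alg_hom (phi : FA -> G0) : Prop :=
  [/\ forall f, isFA f -> isG0 (phi f),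
      forall f g, isFA f -> isFA g -> phi (fa_add f g) = g0_add (phi f) (phi g),
      forall c f, isFA f -> phi (fa_scale c f) = g0_scale c (phi f) &
      forall f g, isFA f -> isFA g -> phi (fa_mul f g) = g0_mul (phi f) (phi g)].

Definition T_G0 (f : FA) : Prop :=
  isFA f /\ forall phi, alg_hom phi -> phi f = g0_zero.

End Defs.

(* Main.v *)
Require Import Defs.
From mathcomp Require Import all_boot all_order all_algebra.
From mathcomp Require Import finmap.
From mathcomp Require Import boolp.
From mathcomp Require Import ring zify.
From HB Require Import structures.
Set Implicit Arguments. Unset Strict Implicit. Unset Printing Implicit Defensive.
Import Order.TTheory GRing.Theory.
Local Open Scope ring_scope.


Section Comb.
Local Open Scope fset_scope.
Lemma big_fsetU_dis (R : Type) (idx : R) (op : Monoid.com_law idx)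
  (B C : {fset nat}) (F : nat -> R) : [disjoint B & C] ->
  \big[op/idx]_(i <- B `|` C) F i =
  op (\big[op/idx]_(i <- B) F i) (\big[op/idx]_(i <- C) F i).
Proof.
move=> /fdisjointP dBC; rewrite (@big_fsetID _ _ _ _ (mem B)); congr (op _ _).
  by apply: eq_fbigl => i; rewrite !inE /=; case: (i \in B); rewrite ?andbF.
apply: eq_fbigl => i; rewrite !inE /=.
by case iB: (i \in B) => /=; [have := dBC _ iB; case: (i \in C)|rewrite andbT].
Qed.

Lemma ninvUl (B C D : {fset nat}) : [disjoint B & C] ->
  ninv (B `|` C) D = (ninv B D + ninv C D)%N.
Proof. by move=> d; rewrite /ninv big_fsetU_dis. Qed.

Lemma ninvUr (B C D : {fset nat}) : [disjoint C & D] ->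
  ninv B (C `|` D) = (ninv B C + ninv B D)%N.
Proof.
by move=> d; rewrite /ninv -big_split /=; apply: eq_bigr => a _; rewrite big_fsetU_dis.
Qed.

Lemma ninv0l B : ninv fset0 B = 0%N.
Proof. by rewrite /ninv big_seq_fset0. Qed.
Lemma ninv0r B : ninv B fset0 = 0%N.
Proof. by rewrite /ninv big1 // => a _; rewrite big_seq_fset0. Qed.

Lemma ninv_sym (A B : {fset nat}) : [disjoint A & B]%fset ->
  (ninv A B + ninv B A)%N = (#|` A| * #|` B|)%N.
Proof.
move=> /fdisjointP d; rewrite /ninv [X in (_ + X)%N]exchange_big -big_split /=.
rewrite card_fset_sum1 big_distrl /= big_seq [RHS]big_seq; apply: eq_bigr => a aA.
rewrite mul1n card_fset_sum1 -big_split big_seq [RHS]big_seq /=.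
apply: eq_bigr => b bB; have: a != b by apply: contraNneq (d _ aA) => ->.
by rewrite neq_ltn; case: ltngtP.
Qed.

Lemma sum_sub (V : nmodType) (F : {fset nat} -> {fset nat} -> V) (S : {fset nat}) :
  \sum_(A <- fpowerset S) \sum_(B <- fpowerset A) F B A =
  \sum_(B <- fpowerset S) \sum_(C <- fpowerset (S `\` B)) F B (B `|` C).
Proof.
transitivity (\sum_(A <- fpowerset S) \sum_(B <- fpowerset S)
   (if B `<=` A then F B A else 0)).
  rewrite big_seq [RHS]big_seq; apply: eq_bigr => A; rewrite fpowersetE => AS.
  transitivity (\sum_(B <- fpowerset A) (if B `<=` A then F B A else 0)).
    by rewrite big_seq [RHS]big_seq; apply: eq_bigr => B; rewrite fpowersetE => ->.
  apply: big_fset_incl; first by rewrite fpowersetS.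
  by move=> B _; rewrite fpowersetE; case: (B `<=` A).
rewrite exchange_big /= big_seq [RHS]big_seq; apply: eq_bigr => B.
rewrite fpowersetE => BS; rewrite -big_mkcond /=.
transitivity (\sum_(A <- [fset B `|` C | C in fpowerset (S `\` B)]) F B A); last first.
  rewrite [LHS]big_imfset //=.

  move=> C1 C2; rewrite !fpowersetE => /fsubsetP C1S /fsubsetP C2S e.
  apply/fsetP => x; move: (C1S x) (C2S x) (congr1 (fun X => x \in X) e).
  by rewrite !inE; case: (x \in B) => /=; [case: (x \in C1); case: (x \in C2)=> // /(_ isT)|].
apply: eq_fbigl_cond => A; rewrite !inE /= andbT fpowersetE.
apply/andP/imfsetP => /=.
  case=> AS BA; exists (A `\` B); first by rewrite fpowersetE; apply: fsetSD.
  apply/fsetP => x; rewrite !inE; move: (fsubsetP BA x).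
  by case: (x \in B); case: (x \in A) => // /(_ isT).
case=> C; rewrite fpowersetE => /fsubsetP CS ->; split.
  apply/fsubsetP => x; rewrite !inE; move: (fsubsetP BS x) (CS x).
  by rewrite !inE; case: (x \in B) => [/(_ isT)|]//; case: (x \in C) => // _ /(_ isT) /andP[].
exact: fsubsetUl.
Qed.

End Comb.

Definition GR (k : fieldType) := G0 k.
HB.instance Definition _ (k : fieldType) := gen_eqMixin (GR k).
HB.instance Definition _ (k : fieldType) := gen_choiceMixin (GR k).

Section Z.
Variable k : fieldType.
Definition gopp (f : GR k) : GR k := fun S => - f S.
Lemma gaddA : associative (@g0_add k).
Proof. by move=> f g h; apply/funext => S; rewrite /g0_add addrA. Qed.
Lemma gaddC : commutative (@g0_add k).
Proof. by move=> f g; apply/funext => S; rewrite /g0_add addrC. Qed.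
Lemma gadd0 : left_id (@g0_zero k) (@g0_add k).
Proof. by move=> f; apply/funext => S; rewrite /g0_add /g0_zero add0r. Qed.
Lemma gaddN : left_inverse (@g0_zero k) gopp (@g0_add k).
Proof. by move=> f; apply/funext => S; rewrite /g0_add /g0_zero /gopp addNr. Qed.
End Z.

HB.instance Definition _ (k : fieldType) :=
  GRing.isZmodule.Build (GR k) (@gaddA k) (@gaddC k) (@gadd0 k) (@gaddN k).


Section Ring.
Variable k : fieldType.
Local Notation sg A B := ((-1 : k) ^+ ninv A B).
Local Open Scope fset_scope.

Lemma sub_dis (S B C : {fset nat}) : C `<=` S `\` B -> [disjoint B & C].
Proof.
move=> /fsubsetP h; apply/fdisjointP => x xB; apply/negP => /h.
by rewrite inE xB.
Qed.

Lemma UDK (B C : {fset nat}) : [disjoint B & C] -> (B `|` C) `\` B = C.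
Proof.
move=> /fdisjointP d; apply/fsetP => x; rewrite !inE.
by case xB: (x \in B) => //=; move: (d _ xB); case: (x \in C).
Qed.

Lemma UDid (C X : {fset nat}) : C `<=` X -> C `|` (X `\` C) = X.
Proof.
move=> /fsubsetP h; apply/fsetP => x; rewrite !inE; move: (h x).
by case: (x \in C); case: (x \in X) => // /(_ isT).
Qed.

Lemma disD (C X : {fset nat}) : [disjoint C & X `\` C].
Proof. by apply/fdisjointP => x xC; rewrite inE xC. Qed.

Lemma sg_assoc (B C D : {fset nat}) : [disjoint B & C] -> [disjoint C & D] ->
  [disjoint B & D] ->
  sg (B `|` C) D * sg B C = sg B (C `|` D) * sg C D.
Proof.
move=> dBC dCD dBD; rewrite -!exprD ninvUl // ninvUr //.
by congr (_ ^+ _); lia.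
Qed.

Definition gmul (f g : GR k) : GR k := g0_mul f g.

Lemma gmulA : associative gmul.
Proof.
move=> f g h; apply/funext => S; rewrite /gmul /g0_mul.
symmetry; under [RHS]eq_bigr do rewrite mulr_sumr.
under [LHS]eq_bigr do rewrite mulr_sumr mulr_suml.
rewrite sum_sub big_seq [RHS]big_seq; apply: eq_bigr => B.
rewrite fpowersetE => BS.
rewrite big_seq [RHS]big_seq; apply: eq_bigr => C.
rewrite fpowersetE => CSB.
have dBC := sub_dis CSB.
rewrite UDK // fsetDDl.
set D := S `\` (B `|` C).
have eSB : S `\` B = C `|` D by rewrite /D -fsetDDl UDid.
rewrite eSB.
have dCD : [disjoint C & D] by rewrite /D -fsetDDl; apply: disD.
have dBD : [disjoint B & D].
  by apply/fdisjointP => x xB; rewrite /D !inE xB.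
have E := sg_assoc dBC dCD dBD.
transitivity ((sg (B `|` C) D * sg B C) * (f B * g C * h D)); first by ring.
by rewrite E; ring.
Qed.

Definition gone : GR k := fun S => if S == fset0 then 1 else 0.

Lemma gmul1 : left_id gone gmul.
Proof.
move=> f; apply/funext => S; rewrite /gmul /g0_mul.
rewrite (big_fsetD1 fset0) ?fpowersetE ?fsub0set //= /gone eqxx ninv0l fsetD0.
rewrite expr0 !mul1r big1_fset ?addr0 // => A; rewrite !inE => /andP[nA _] _.
by rewrite (negbTE nA) mulr0 mul0r.
Qed.

Lemma gmul1r : right_id gone gmul.
Proof.
move=> f; apply/funext => S; rewrite /gmul /g0_mul.
rewrite (big_fsetD1 S) ?fpowersetE ?fsubset_refl //= /gone fsetDv eqxx ninv0r.
rewrite expr0 !mul1r mulr1 big1_fset ?addr0 // => A; rewrite !inE => /andP[nA AS] _.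
rewrite fpowersetE in AS.
have -> : (S `\` A == fset0) = false.
  by rewrite fsetD_eq0; apply: contraNF nA => SA; rewrite eqEfsubset AS SA.
by rewrite mulr0.
Qed.

Lemma gmulDl : left_distributive gmul (@g0_add k).
Proof.
move=> f g h; apply/funext => S; rewrite /gmul /g0_mul /g0_add -big_split /=.
by apply: eq_bigr => A _; rewrite mulrDr mulrDl.
Qed.

Lemma gmulDr : right_distributive gmul (@g0_add k).
Proof.
move=> f g h; apply/funext => S; rewrite /gmul /g0_mul /g0_add -big_split /=.
by apply: eq_bigr => A _; rewrite mulrDr.
Qed.

Lemma gone_neq0 : gone != g0_zero k.
Proof.
apply/negP => /eqP /(congr1 (fun f => f fset0)); rewrite /gone /g0_zero eqxx.
by move/eqP; rewrite oner_eq0.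
Qed.
End Ring.

HB.instance Definition _ (k : fieldType) :=
  GRing.Zmodule_isNzRing.Build (GR k) (@gmulA k) (@gmul1 k) (@gmul1r k)
    (@gmulDl k) (@gmulDr k) (@gone_neq0 k).

Lemma test5 (k : fieldType) (x y : GR k) : x * y = g0_mul x y.
Proof. by []. Qed.

Section Parity.
Local Notation "S \diff A" := (S `\` A)%fset (at level 40).
Variable k : fieldType.
Local Notation sg A B := ((-1 : k) ^+ ninv A B).

Definition supp_par (b : bool) (x : GR k) := forall S : {fset nat}, odd #|` S| != b -> x S = 0.

Lemma cardD_sub (A S : {fset nat}) : (A `<=` S)%fset -> odd #|` S| = odd #|` A| (+) odd #|` S \diff A|.
Proof. by move=> AS; rewrite cardfsDS // -oddD subnKC // fsubset_leq_card. Qed.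

Lemma par_mul a b (x y : GR k) : supp_par a x -> supp_par b y -> supp_par (a (+) b) (x * y).
Proof.
move=> hx hy S hS; rewrite /= /GRing.mul /= /gmul /g0_mul big1_fset // => A.
rewrite fpowersetE => AS _.
case ea: (odd #|` A| == a); last by rewrite hx ?ea // mulr0 mul0r.
case eb: (odd #|` S \diff A| == b); last by rewrite (hy (S \diff A)) ?eb // mulr0.
by move: hS; rewrite (cardD_sub AS) (eqP ea) (eqP eb) eqxx.
Qed.

Lemma par_add b (x y : GR k) : supp_par b x -> supp_par b y -> supp_par b (x + y).
Proof. by move=> hx hy S hS; rewrite /= /GRing.add /= /g0_add hx // hy // addr0. Qed.

Lemma par_opp b (x : GR k) : supp_par b x -> supp_par b (- x).
Proof. by move=> hx S hS; rewrite /= /GRing.opp /= /gopp hx // oppr0. Qed.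

Lemma sg_swap (A B : {fset nat}) : [disjoint A & B]%fset ->
  sg B A = (-1) ^+ (odd #|` A| && odd #|` B|) * sg A B.
Proof.
move=> d; rewrite -oddM signr_odd -(ninv_sym d) exprD mulrAC -exprD addnn -mul2n.
by rewrite mulnC exprM sqrr_sign mul1r.
Qed.

Lemma mul_swap (x y : GR k) (S : {fset nat}) :
  (y * x) S = \sum_(A <- fpowerset S) sg (S \diff A) A * y (S \diff A) * x A.
Proof.
rewrite /= /GRing.mul /= /gmul /g0_mul.
transitivity (\sum_(A <- [fset S \diff B | B in fpowerset S]%fset)
                sg A (S \diff A) * y A * x (S \diff A)).
  apply: eq_fbigl => A; rewrite fpowersetE; apply/idP/imfsetP => /=.
    by move=> AS; exists (S \diff A); rewrite ?fpowersetE ?fsubsetDl // fsetDK.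
  by case=> B _ ->; rewrite fsubsetDl.
rewrite big_imfset /=; last first.
  move=> B1 B2; rewrite !fpowersetE => h1 h2 e.
  by rewrite -(fsetDK h1) e fsetDK.
rewrite big_seq [RHS]big_seq; apply: eq_bigr => A; rewrite fpowersetE => AS.
by rewrite fsetDK.
Qed.

Lemma gmulE (x y : GR k) (S : {fset nat}) :
  (x * y) S = \sum_(A <- fpowerset S) sg A (S \diff A) * x A * y (S \diff A).
Proof. by []. Qed.
Lemma goppE (x : GR k) (S : {fset nat}) : (- x) S = - x S.
Proof. by []. Qed.
Lemma gaddE (x y : GR k) (S : {fset nat}) : (x + y) S = x S + y S.
Proof. by []. Qed.
Lemma g0E (S : {fset nat}) : (0 : GR k) S = 0.
Proof. by []. Qed.

Lemma ev_comm (x y : GR k) : supp_par false x -> x * y = y * x.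
Proof.
move=> hx; apply/funext => S; rewrite gmulE [RHS]mul_swap.
rewrite big_seq [RHS]big_seq; apply: eq_bigr => A; rewrite fpowersetE => AS.
rewrite (sg_swap (disD A S)).
case oA: (odd #|` A|); last by rewrite /= expr0 mul1r; ring.
by rewrite hx ?oA // !mulr0 mul0r.
Qed.

Lemma od_anti (x y : GR k) : supp_par true x -> supp_par true y -> x * y = - (y * x).
Proof.
move=> hx hy; apply/funext => S; rewrite gmulE goppE mul_swap -sumrN.
rewrite big_seq [RHS]big_seq; apply: eq_bigr => A; rewrite fpowersetE => AS.
rewrite (sg_swap (disD A S)).
case oA: (odd #|` A|); last by rewrite hx ?oA // !mulr0 !mul0r ?oppr0 ?mulr0.
case oB: (odd #|` S \diff A|); last by rewrite (hy (S \diff A)) ?oB // !mulr0 ?mul0r ?oppr0 ?mulr0 ?mul0r ?oppr0.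
by rewrite /= expr1; ring.
Qed.

Lemma od_sq (x : GR k) : (2%:R : k) != 0 -> supp_par true x -> x * x = 0.
Proof.
move=> h2 hx; have e := od_anti hx hx; apply/funext => S.
have : (x * x) S * 2%:R = 0.
  by rewrite mulr2n mulrDr mulr1 {1}e goppE addNr.
by rewrite g0E; move/eqP; rewrite mulf_eq0 (negbTE h2) orbF => /eqP.
Qed.
End Parity.

Section Nil.
Variable k : fieldType.
Variable p : nat.
Hypothesis hch : p \in [pchar k].

Lemma natmulE (x : GR k) n (S : {fset nat}) : (x *+ n) S = x S *+ n.
Proof. by elim: n => [|n IH]; rewrite ?mulr0n // !mulrS gaddE IH. Qed.

Lemma goneE (S : {fset nat}) : (1 : GR k) S = if S == fset0 then 1 else 0.
Proof. by []. Qed.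

Lemma pchar_GR : p \in [pchar (GR k)].
Proof.
have pp := pcharf_prime hch.
apply/andP; split => //; apply/eqP/funext => S.
rewrite natmulE g0E goneE; case: ifP => _; last by rewrite mul0rn.
exact: pcharf0 hch.
Qed.

Definition mono (c : k) (S0 : {fset nat}) : GR k := fun S => if S == S0 then c else 0.

Lemma mono_sq c S0 : (S0 = fset0 -> c = 0) -> mono c S0 * mono c S0 = 0.
Proof.
move=> h; apply/funext => S; rewrite gmulE g0E big1 // => A _.
rewrite /mono; case: eqP => [eA|_]; last by rewrite mulr0 mul0r.
case: eqP => [e|_]; last by rewrite mulr0.
suff -> : c = 0 by rewrite !mulr0.
apply: h; apply/fsetP => z; rewrite inE; apply/negP => zS0.
by move: (zS0); rewrite -{1}e inE eA zS0.
Qed.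

Lemma mono_ev c S0 : (odd #|` S0| -> c = 0) -> supp_par false (mono c S0).
Proof. by move=> h S hS; rewrite /mono; case: eqP => // eS; apply: h; move: hS; rewrite eS; case: odd. Qed.

Lemma nil_list (l : seq {fset nat}) (x : GR k) : supp_par false x -> x fset0 = 0 ->
  (forall S, x S != 0 -> S \in l) -> x ^+ p = 0.
Proof.
have pp := pcharf_prime hch; have p1 := prime_gt1 pp.
elim: l x => [|S0 l IH] x hev h0 hs.
  have -> : x = 0.
    by apply/funext => S; rewrite g0E; apply/eqP; apply: contraT => /hs.
  by rewrite expr0n; case: p p1.
pose x' : GR k := fun S => if S == S0 then 0 else x S.
pose m := mono (x S0) S0.
have ex : x = x' + m.
  by apply/funext => S; rewrite gaddE /x' /m /mono; case: eqP => [->|]; rewrite ?add0r ?addr0.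
have hev' : supp_par false x'.
  by move=> S hS; rewrite /x'; case: eqP => // _; apply: hev.
have hm : supp_par false m by apply: mono_ev => o; apply: hev; rewrite o.
have hx'0 : x' fset0 = 0 by rewrite /x'; case: ifP.
have hs' : forall S, x' S != 0 -> S \in l.
  by move=> S; rewrite /x'; case: ifP => [_|nS /hs]; rewrite ?eqxx // inE nS.
have c : GRing.comm x' m by rewrite /GRing.comm ev_comm.
have := pFrobenius_autD_comm pchar_GR c; rewrite !pFrobenius_autE => e.
rewrite ex e (IH _ hev' hx'0 hs') add0r.
have -> : p = (p - 2).+2 by rewrite -addn2 subnK.
rewrite !exprS mulrA mono_sq ?mul0r // => e0.
by rewrite e0.
Qed.
End Nil.

Section Abs.
Variable R : nzRingType.

Lemma conj_pow (X y z : R) n : X * y = z * X -> X * y ^+ n = z ^+ n * X.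
Proof.
move=> h; elim: n => [|n IH]; first by rewrite !expr0 mulr1 mul1r.
by rewrite exprSr mulrA IH -mulrA h mulrA -exprSr.
Qed.

Lemma DlD (x y b : R) : (x + y) * b - b * (x + y) = (x * b - b * x) + (y * b - b * y).
Proof. by rewrite mulrDl mulrDr opprD addrACA. Qed.
Lemma DrD (a x y : R) : a * (x + y) - (x + y) * a = (a * x - x * a) + (a * y - y * a).
Proof. by rewrite mulrDl mulrDr opprD addrACA. Qed.

Lemma abstract (a0 a1 v0 v1 w0 w1 : R) n :
  (forall y, a0 * y = y * a0) -> (forall y, v0 * y = y * v0) ->
  (forall y, w0 * y = y * w0) ->
  a1 * (v0 * w0 + v1 * w1) = (v0 * w0 + v1 * w1) * a1 ->
  a1 * a1 = 0 -> v1 * v1 = 0 -> w1 * w1 = 0 -> w1 * v1 = - (v1 * w1) ->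
  (v0 * w1 + v1 * w0) * (v0 * w1 + v1 * w0) = 0 ->
  (v0 * w1 + v1 * w0) * a1 = - (a1 * (v0 * w1 + v1 * w0)) ->
  v0 ^+ n.+1 = 0 -> w0 ^+ n.+1 = 0 ->
  ((a0 + a1) * ((v0 + v1) * (w0 + w1)) - ((v0 + v1) * (w0 + w1)) * (a0 + a1))
    * (a0 + a1) ^+ n * ((v0 + v1) * (w0 + w1)) ^+ n = 0.
Proof.
move=> ha0 hv0 hw0 hc0 ha1 hv1 hw1 hvw hc1 hca hv hw.
set a := a0 + a1; set b := (v0 + v1) * (w0 + w1).
set c0 := v0 * w0 + v1 * w1 in hc0; set c1 := v0 * w1 + v1 * w0 in hc1 hca.
set E := v0 * w0.
have eb : b = c0 + c1.
  by rewrite /b /c0 /c1 mulrDl !mulrDr [v1 * w0 + _]addrC addrACA.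
set X := a1 * c1.
have eD : a * b - b * a = X + X.
  rewrite /a DlD ha0 subrr add0r eb DrD hc0 subrr add0r hca opprK //.
have eXa : X * a = a0 * X.
  by rewrite /X /a mulrDr -[a1 * c1 * a1]mulrA hca mulrN [a1 * (a1 * c1)]mulrA ha1 mul0r oppr0 addr0 ha0.
have hE : forall y, E * y = y * E by move=> y; rewrite /E -mulrA hw0 mulrA hv0 mulrA.
have hcF : c1 * (v1 * w1) = 0.
  rewrite /c1 mulrDl -!mulrA [w1 * (v1 * w1)]mulrA hvw mulNr -mulrA hw1 mulr0 oppr0 mulr0.
  by rewrite add0r hw0 !mulrA hv1 !mul0r.
have ec1b : c1 * b = E * c1.
  by rewrite eb mulrDr hc1 addr0 /c0 mulrDr hcF addr0 hE.
have eEn : E ^+ n * c1 = 0.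
  rewrite /E /c1 exprMn_comm; last by rewrite /GRing.comm hv0.
  rewrite mulrDr -!mulrA [w0 ^+ n * (v0 * w1)]mulrA -(hv0 (w0 ^+ n)).
  have cw : v1 * w0 ^+ n = w0 ^+ n * v1.
    by apply: commrX; rewrite /GRing.comm hw0.
  rewrite [w0 ^+ n * (v1 * w0)]mulrA -cw -[v1 * w0 ^+ n * w0]mulrA -exprSr hw mulr0 mulr0 addr0.
  by rewrite !mulrA -exprSr hv !mul0r.
by rewrite eD !mulrDl (conj_pow _ eXa) /X -!mulrA (conj_pow _ ec1b) eEn !mulr0 addr0.
Qed.
End Abs.

Section FAlg.
Variable k : fieldType.
Implicit Types f g : FA k.

Lemma isFA_add f g : isFA f -> isFA g -> isFA (fa_add f g).
Proof.
move=> [f0 [sf hf]] [g0 [sg hg]]; split; first by rewrite /fa_add f0 g0 addr0.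
exists (sf ++ sg) => w; rewrite mem_cat /fa_add.
case: (boolP (f w != 0)) => [/hf -> //|/negPn/eqP ->]; rewrite add0r => /hg ->.
by rewrite orbT.
Qed.

Lemma isFA_scale c f : isFA f -> isFA (fa_scale c f).
Proof.
move=> [f0 [sf hf]]; split; first by rewrite /fa_scale f0 mulr0.
by exists sf => w; rewrite /fa_scale mulf_eq0 negb_or => /andP[_ /hf].
Qed.

Lemma isFA_mul f g : isFA f -> isFA g -> isFA (fa_mul f g).
Proof.
move=> [f0 [sf hf]] [g0 [sg hg]]; split; first by rewrite /fa_mul big_geq.
exists [seq a ++ b | a <- sf, b <- sg] => w nz.
have : has (fun i => f (take i w) * g (drop i w) != 0) (index_iota 1 (size w)).
  apply: contraR nz => /hasPn h; rewrite /fa_mul big_seq big1 // => i /h /negPn/eqP.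
  by [].
case/hasP => i _; rewrite mulf_eq0 negb_or => /andP[/hf a /hg b].
by apply/allpairsP; exists (take i w, drop i w); rewrite /= cat_take_drop.
Qed.

Lemma fa_opp_scale f : fa_opp f = fa_scale (-1) f.
Proof. by apply/funext => w; rewrite /fa_opp /fa_scale mulN1r. Qed.

Lemma isFA_opp f : isFA f -> isFA (fa_opp f).
Proof. by rewrite fa_opp_scale; apply: isFA_scale. Qed.

Lemma isFA_comm f g : isFA f -> isFA g -> isFA (fa_comm f g).
Proof.
by move=> hf hg; apply: isFA_add; [apply: isFA_mul|apply/isFA_opp/isFA_mul].
Qed.

Lemma isFA_iter f n : isFA f -> isFA (iter n (fa_mul f) f).
Proof. by move=> hf; elim: n => //= n IH; apply: isFA_mul. Qed.

Lemma isFA_pow f n : isFA f -> isFA (fa_pow f n).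
Proof. exact: isFA_iter. Qed.

Variable phi : FA k -> G0 k.
Hypothesis hphi : alg_hom phi.

Lemma phi_add f g : isFA f -> isFA g ->
  (phi (fa_add f g) : GR k) = (phi f : GR k) + (phi g : GR k).
Proof. by case: hphi => _ h _ _; apply: h. Qed.

Lemma phi_mul f g : isFA f -> isFA g ->
  (phi (fa_mul f g) : GR k) = (phi f : GR k) * (phi g : GR k).
Proof. by case: hphi => _ _ _ h; apply: h. Qed.

Lemma phi_opp f : isFA f -> (phi (fa_opp f) : GR k) = - (phi f : GR k).
Proof.
case: hphi => _ _ h _ hf; rewrite fa_opp_scale h //.
by apply/funext => S; rewrite goppE /g0_scale mulN1r.
Qed.

Lemma phi_comm f g : isFA f -> isFA g ->
  (phi (fa_comm f g) : GR k) = (phi f : GR k) * phi g - (phi g : GR k) * phi f.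
Proof.
move=> hf hg; rewrite /fa_comm /fa_sub phi_add ?phi_opp ?phi_mul //;
  by [apply: isFA_mul | apply/isFA_opp/isFA_mul].
Qed.

Lemma phi_iter f n : isFA f -> (phi (iter n (fa_mul f) f) : GR k) = (phi f : GR k) ^+ n.+1.
Proof.
move=> hf; elim: n => [|n IH]; first by rewrite expr1.
by rewrite iterS phi_mul ?IH ?exprS //; apply: isFA_iter.
Qed.

Lemma phi_pow f n : (0 < n)%N -> isFA f -> (phi (fa_pow f n) : GR k) = (phi f : GR k) ^+ n.
Proof. by move=> n0 hf; rewrite /fa_pow phi_iter // prednK. Qed.
End FAlg.

Section EO.
Variable k : fieldType.
Definition gev (x : GR k) : GR k := fun S => if odd #|` S| then 0 else x S.
Definition god (x : GR k) : GR k := fun S => if odd #|` S| then x S else 0.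

Lemma split_eo (x : GR k) : x = gev x + god x.
Proof.
by apply/funext => S; rewrite gaddE /gev /god; case: odd; rewrite ?add0r ?addr0.
Qed.

Lemma gev_par x : supp_par false (gev x).
Proof. by move=> S; rewrite /gev; case: odd. Qed.
Lemma god_par x : supp_par true (god x).
Proof. by move=> S; rewrite /god; case: odd. Qed.

Lemma gev_nil p (x : GR k) : p \in [pchar k] -> isG0 x -> gev x ^+ p = 0.
Proof.
move=> hch [x0 [s hs]]; apply: (nil_list hch (l := s)); first exact: gev_par.
  by rewrite /gev cardfs0.
by move=> S; rewrite /gev; case: odd; rewrite ?eqxx //; apply: hs.
Qed.
End EO.

Theorem corollary2p3 (k : fieldType) (p : nat) (hp : prime p) (hp2 : (2 < p)%N)
  (hchar : p \in [pchar k]) (u v w : FA k) :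
  isFA u -> isFA v -> isFA w -> T_G0 (kappa p u (fa_mul v w)).
Proof.
move=> hu hv hw; have hvw := isFA_mul hv hw.
have p0 : (0 < p.-1)%N by move: hp2; case: (p) => [|[|[|]]].
split.
  by apply: isFA_mul; [apply: isFA_mul; [apply: isFA_comm|apply: isFA_pow]|apply: isFA_pow].
move=> phi hphi.
have h2 : (2%:R : k) != 0.
  apply/negP => /eqP h2.
  have op : odd p by case: (even_prime hp) hp2 => [->|].
  have := pcharf0 hchar; rewrite -[p]odd_double_half op /= natrD -mul2n natrM h2.
  by rewrite mul0r addr0 => /eqP; rewrite oner_eq0.
rewrite /kappa.
change ((phi (fa_mul (fa_mul (fa_comm u (fa_mul v w)) (fa_pow u p.-1)) (fa_pow (fa_mul v w) p.-1)) : GR k) = 0).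
rewrite phi_mul //; last by apply: isFA_pow.
  2: by apply: isFA_mul; [apply: isFA_comm|apply: isFA_pow].
rewrite phi_mul //; [|by apply: isFA_comm|by apply: isFA_pow].
rewrite phi_comm // !phi_pow // phi_mul //.
have [A0 _] : isG0 (phi u) by case: hphi => h _ _ _; apply: h.
have gv : isG0 (phi v) by case: hphi => h _ _ _; apply: h.
have gw : isG0 (phi w) by case: hphi => h _ _ _; apply: h.
set A : GR k := phi u; set V : GR k := phi v; set W : GR k := phi w.
rewrite (split_eo A) (split_eo V) (split_eo W).
have ep : p = (p.-1).+1 by rewrite prednK // prime_gt0.
apply: abstract.
- by move=> y; apply: ev_comm; apply: gev_par.
- by move=> y; apply: ev_comm; apply: gev_par.
- by move=> y; apply: ev_comm; apply: gev_par.
- symmetry; apply: ev_comm; apply: par_add.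
    exact: (par_mul (gev_par V) (gev_par W)).
  exact: (par_mul (god_par V) (god_par W)).
- by apply: od_sq => //; apply: god_par.
- by apply: od_sq => //; apply: god_par.
- by apply: od_sq => //; apply: god_par.
- by apply: od_anti; apply: god_par.
- apply: od_sq => //; apply: par_add.
    exact: (par_mul (gev_par V) (god_par W)).
  exact: (par_mul (god_par V) (gev_par W)).
- apply: od_anti; last exact: god_par.
  apply: par_add.
    exact: (par_mul (gev_par V) (god_par W)).
  exact: (par_mul (god_par V) (gev_par W)).
- by rewrite -ep; apply: gev_nil.
- by rewrite -ep; apply: gev_nil.
Qed.
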